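(* Let $\kappa\in\mathbb{C}$, let $M\ge1$ be an integer and let $\phi_1,\dots,\phi_M$ be parameters. For each $k$ put $$\Delta^*_k=e^{-i\phi_k}\Bigl(\sqrt{\cos^2\phi_k+\kappa}+\cos\phi_k\Bigr),\qquad \Delta_k=e^{i\phi_k}\Bigl(\sqrt{\cos^2\phi_k+\kappa}+\cos\phi_k\Bigr),$$ (so that $\kappa=\Delta^*_k\Delta_k-\Delta^*_k-\Delta_k$). For $m\in\mathbb{Z}$, $x_1\in\mathbb{C}$ and amplitudes $f_1,\dots,f_M$ define $$X_m(x_1;\phi_k,f_k)=f_k\,e^{(\Delta^*_k-\Delta_k)x_1}\Bigl(\frac{\Delta_k}{\Delta^*_k}\Bigr)^{m+1}$$ and $$\boldsymbol{\tau}_m\bigl(x_1;\{\phi_k,f_k\}_{k=1}^M\bigr)=\prod_{i<j}(\Delta^*_i-\Delta^*_j)^{-1}\det\Bigl|(1-\Delta^*_j)^{i-1}-X_m(x_1;\phi_j,f_j)\,(1-\Delta_j)^{i-1}\frac{\Delta^*_j}{\Delta_j}\Bigr|_{i,j=1}^M .$$ Then for every choice of $\phi_1,\dots,\phi_M$ for which this expression is defined, $\boldsymbol{\tau}_m\bigl(0;\{\phi_k,1\}_{k=1}^M\bigr)=0$ for all $m\in\{-M+1,-M+2,\dots,0\}$.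
   Context: A fixed branch of the square root is used in the definition of $\Delta^*_k,\Delta_k$. ''Defined'' means that the $\Delta^*_k$ are pairwise distinct and $\Delta_k,\Delta^*_k\neq0$. The function $\boldsymbol{\tau}_m$ is the (normalized, rational) $M$-soliton tau-function of the relativistic Toda chain evaluated at continuous time $x_1$, with all soliton amplitudes $f_k$ set to $1$ in the claim. *)

(* Defs.v *)
From HB Require Import structures.
From mathcomp Require Import all_boot all_order all_algebra.
From mathcomp Require Import complex.
From mathcomp Require Import all_classical all_reals all_analysis.
Set Implicit Arguments. Unset Strict Implicit. Unset Printing Implicit Defensive.
Import Order.TTheory GRing.Theory Num.Theory.
Local Open Scope ring_scope.
Local Open Scope complex_scope.

Section Defs.
Variable R : realType.
Local Notation C := R[i].

Definition cexp (z : C) : C :=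
  (expR (complex.Re z))%:C * ((cos (complex.Im z))%:C + 'i * (sin (complex.Im z))%:C).

Definition sqrt_branch (s : C -> C) : Prop := forall z, s z ^+ 2 = z.

Definition DeltaS (s : C -> C) (kappa : C) (phi : R) : C :=
  cexp (- 'i * phi%:C) * (s ((cos phi)%:C ^+ 2 + kappa) + (cos phi)%:C).
Definition Delta (s : C -> C) (kappa : C) (phi : R) : C :=
  cexp ('i * phi%:C) * (s ((cos phi)%:C ^+ 2 + kappa) + (cos phi)%:C).

Definition Xm (s : C -> C) (kappa : C) (m : int) (x1 : C) (phi : R) (f : C) : C :=
  f * cexp ((DeltaS s kappa phi - Delta s kappa phi) * x1)
    * (Delta s kappa phi / DeltaS s kappa phi) ^ (m + 1).

(* tau_m(x1; {phi_k, f_k}_{k=1}^M); indices shifted to 0..M-1, so (.)^(i-1) becomes (.)^i *)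
Definition tau (s : C -> C) (kappa : C) (M : nat) (m : int) (x1 : C)
    (phi : 'I_M -> R) (f : 'I_M -> C) : C :=
  (\prod_(i < M) \prod_(j < M | (i < j)%N)
      (DeltaS s kappa (phi i) - DeltaS s kappa (phi j))^-1) *
  \det (\matrix_(i < M, j < M)
     ((1 - DeltaS s kappa (phi j)) ^+ i
      - Xm s kappa m x1 (phi j) (f j) * (1 - Delta s kappa (phi j)) ^+ i
          * (DeltaS s kappa (phi j) / Delta s kappa (phi j)))).
End Defs.

(* Main.v *)
Require Import Defs.
From HB Require Import structures.
From mathcomp Require Import all_boot all_order all_algebra.
From mathcomp Require Import complex.
From mathcomp Require Import all_classical all_reals all_analysis.
From mathcomp Require Import zify ring.
Import Order.TTheory GRing.Theory Num.Theory.
Local Open Scope ring_scope.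
Local Open Scope complex_scope.

Lemma binsum (F : comNzRingType) (M n : nat) (x : F) : (n < M)%N ->
  \sum_(i < M) (-1)^+i * ('C(n,i))%:R * x^+i = (1-x)^+n.
Proof.
move=> h; rewrite exprBn.
rewrite (big_ord_widen _ (fun i => (-1)^+i * 1^+(n-i) * x^+i *+ 'C(n,i)) h).
rewrite [RHS]big_mkcond; apply: eq_bigr => i _.
case: ifP => hi.
  by rewrite expr1n mulr1 -[in RHS]mulrnAr -[in RHS]mulr_natl mulrA.
by rewrite bin_small ?mulr0 ?mul0r // ltnNge -ltnS hi.
Qed.

Theorem proposition3p3 (R : realType) (s : R[i] -> R[i]) (kappa : R[i])
    (M : nat) (phi : 'I_M -> R) :
  sqrt_branch s -> (0 < M)%N ->
  (forall k, DeltaS s kappa (phi k) != 0) ->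
  (forall k, Delta s kappa (phi k) != 0) ->
  (forall k l, k != l -> DeltaS s kappa (phi k) != DeltaS s kappa (phi l)) ->
  forall m : int, - (M%:Z) + 1 <= m <= 0 ->
    tau s kappa m 0 phi (fun _ => 1) = 0.
Proof.
move=> _ M0 HS HD _ m /andP[lo hi].
have [n [-> nM]] : exists n : nat, m = - (n%:Z) /\ (n < M)%N.
  exists `|m|%N; split; first by rewrite -[m]opprK abszN gez0_abs ?oppr_ge0.
  lia.
have ce : cexp (0 : R[i]) = 1.
  rewrite /cexp /= expR0 cos0 sin0 mulr0 addr0 mul1r //.
rewrite /tau; apply/eqP; rewrite mulf_eq0; apply/orP; right.
apply/det0P; exists (\row_(i < M) ((-1)^+i * ('C(n,i))%:R)).
  apply/eqP => /rowP /(_ (Ordinal M0)); rewrite !mxE /= bin0 mulr1 => /eqP.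
  by rewrite oner_eq0.
apply/rowP => j; rewrite !mxE.
under eq_bigr do rewrite !mxE mulrBr.
rewrite sumrB.
set a := DeltaS s kappa (phi j); set b := Delta s kappa (phi j).
have ha : a != 0 by apply: HS.
have hb : b != 0 by apply: HD.
have -> : Xm s kappa (- n%:Z) 0 (phi j) 1 = (b / a) ^ (- n%:Z + 1).
  by rewrite /Xm mulr0 ce !mul1r.
set c := (b / a) ^ (- n%:Z + 1).
rewrite [X in _ - X](eq_bigr (fun i : 'I_M => (c * (a / b)) * ((-1)^+i * ('C(n,i))%:R * (1-b)^+i))); last first.
  by move=> i _; ring.
rewrite -mulr_sumr (binsum _ _ _ (1 - a) nM) (binsum _ _ _ (1 - b) nM).
have s1 : forall z : R[i], 1 - (1 - z) = z by move=> z; ring.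
rewrite !s1.
rewrite /c expfzDr; last by rewrite mulf_neq0 // invr_eq0.
have -> : (b / a) ^ (- n%:Z) = ((b / a) ^+ n)^-1 by rewrite exprnN.
have -> : (b / a) ^ (Posz 1) = b / a by [].
rewrite -exprVn invf_div (expr_div_n a b n).
field.
by rewrite expf_neq0 // ha hb.
Qed.
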